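(* Let $G$ be a graph with $\mathrm{diam}(G)=3$ such that $D_2(G)$ is connected. Then $\mathrm{diam}(D_2(G))\leqslant 5$.
   Context: All graphs are finite, simple and undirected. For a graph $G$, $\mathrm{d}_G(x,y)$ denotes the length of a shortest path between $x$ and $y$, and $\mathrm{diam}(G)$ is the maximum distance between vertices of $G$. The $2$-distance graph $D_2(G)$ of $G$ is the graph with vertex set $V(G)$ in which two vertices $x,y$ are adjacent if and only if $\mathrm{d}_G(x,y)=2$. *)

(* Defs.v *)
From mathcomp Require Import all_boot.
Set Implicit Arguments. Unset Strict Implicit. Unset Printing Implicit Defensive.

Definition simple_graph (T : finType) (e : rel T) : Prop :=
  symmetric e /\ irreflexive e.

Fixpoint walk (T : Type) (R : T -> T -> Prop) (x y : T) (n : nat) : Prop :=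
  match n with
  | 0 => x = y
  | n'.+1 => exists z, R x z /\ walk R z y n'
  end.

Definition dist (T : Type) (R : T -> T -> Prop) (x y : T) (n : nat) : Prop :=
  walk R x y n /\ forall m, m < n -> ~ walk R x y m.

Definition connected_graph (T : Type) (R : T -> T -> Prop) : Prop :=
  forall x y, exists n, walk R x y n.

Definition diam_eq (T : Type) (R : T -> T -> Prop) (d : nat) : Prop :=
  (forall x y, exists2 n, dist R x y n & n <= d) /\
  (exists x y, dist R x y d).

Definition diam_le (T : Type) (R : T -> T -> Prop) (d : nat) : Prop :=
  forall x y, exists2 n, dist R x y n & n <= d.

Definition D2 (T : finType) (e : rel T) : T -> T -> Prop :=
  fun x y => dist (fun a b => e a b) x y 2.

(* Main.v *)
Require Import Defs.
From mathcomp Require Import all_boot.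
From Stdlib Require Import Classical.
Set Implicit Arguments. Unset Strict Implicit. Unset Printing Implicit Defensive.

Lemma walk_snoc (T : Type) (R : T -> T -> Prop) x y z n :
  walk R x y n -> R y z -> walk R x z n.+1.
Proof.
elim: n x => [|n IH] x /= H Ryz.
- by subst; exists z.
- case: H => w [Rxw Hw]; exists w; split => //; exact: IH.
Qed.

Lemma walk_rev (T : Type) (R : T -> T -> Prop) (Rs : forall a b, R a b -> R b a) x y n :
  walk R x y n -> walk R y x n.
Proof.
elim: n x => [|n IH] x /= H; first by subst.
case: H => w [Rxw Hw]; exact: walk_snoc (IH _ Hw) (Rs _ _ Rxw).
Qed.

Lemma walk_cat (T : Type) (R : T -> T -> Prop) x y z m n :
  walk R x y m -> walk R y z n -> walk R x z (m + n).
Proof.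
elim: m x => [|m IH] x /= H1 H2; first by subst.
case: H1 => w [Rxw Hw]; exists w; split => //; exact: IH.
Qed.

Lemma walk_dist (T : Type) (R : T -> T -> Prop) x y m :
  walk R x y m -> exists2 n, dist R x y n & n <= m.
Proof.
elim: m {-2}m (leqnn m) => [|M IH] m Hm W.
  move: Hm; rewrite leqn0 => /eqP Em; subst m.
  by exists 0 => //; split.
case: (classic (exists2 k, k < m & walk R x y k)) => [[k Hk Wk]|Nk].
  have [n Dn Hn] := IH k (leq_trans Hk Hm) Wk.
  by exists n => //; apply: leq_trans Hn (ltnW Hk).
exists m => //; split => // k Hk Wk; apply: Nk; by exists k.
Qed.

Lemma cross (T : Type) (R : T -> T -> Prop) (P : T -> Prop) n x y :
  walk R x y n -> P x -> ~ P y -> exists s t, P s /\ ~ P t /\ R s t.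
Proof.
elim: n x => [|n IH] x /= W Px Py; first by subst.
case: W => w [Rxw Ww]; case: (classic (P w)) => Pw; first exact: IH Ww Pw Py.
by exists x, w.
Qed.

Definition le2 (T : finType) (e : rel T) (u v : T) : Prop :=
  u = v \/ e u v \/ exists w, e u w /\ e w v.

Definition R2 (T : finType) (e : rel T) (u v : T) (k : nat) : Prop :=
  exists2 m, m <= k & walk (D2 e) u v m.

Lemma D2P (T : finType) (e : rel T) u v :
  D2 e u v <-> (u <> v /\ ~ e u v /\ exists w, e u w /\ e w v).
Proof.
rewrite /D2 /dist /=; split.
  case=> [[w [Huw [w' [Hww' Ew]]]] Hmin]; subst w'; split; [|split].
  - by move=> E; apply: (Hmin 0).
  - by move=> E; apply: (Hmin 1) => //=; exists v.
  - by exists w.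
case=> [Hne [Hnot [w [Huw Hwv]]]]; split.
  by exists w; split => //; exists v.
move=> m Hm W; case: m Hm W => [|[|m]] Hm W.
- exact: Hne W.
- by case: W => z [Huz Ez]; subst z.
- by [].
Qed.

Lemma mkD2 (T : finType) (e : rel T) u v w :
  u <> v -> ~ e u v -> e u w -> e w v -> D2 e u v.
Proof. by move=> H1 H2 H3 H4; apply/D2P; split => //; split => //; exists w. Qed.

Lemma D2_le2 (T : finType) (e : rel T) u v : D2 e u v -> le2 e u v.
Proof. by case/D2P => _ [_ [w H]]; right; right; exists w. Qed.

Lemma D2_sym (T : finType) (e : rel T) (esym : symmetric e) u v : D2 e u v -> D2 e v u.
Proof.
case/D2P => H1 [H2 [w [H3 H4]]]; apply: (@mkD2 _ _ _ _ w).
- by move=> E; apply: H1.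
- by rewrite esym.
- by rewrite esym.
- by rewrite esym.
Qed.

Lemma le2_sym (T : finType) (e : rel T) (esym : symmetric e) u v : le2 e u v -> le2 e v u.
Proof.
case=> [->|[H|[w [H1 H2]]]]; first by left.
  by right; left; rewrite esym.
by right; right; exists w; rewrite esym H2 esym.
Qed.

Lemma R2_0 (T : finType) (e : rel T) u k : R2 e u u k.
Proof. by exists 0. Qed.

Lemma R2_mono (T : finType) (e : rel T) u v i j : i <= j -> R2 e u v i -> R2 e u v j.
Proof. by move=> Hij [m Hm W]; exists m => //; apply: leq_trans Hij. Qed.

Lemma R2_1 (T : finType) (e : rel T) u v : D2 e u v -> R2 e u v 1.
Proof. by move=> H; exists 1 => //=; exists v. Qed.

Lemma R2_cat (T : finType) (e : rel T) u v w i j :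
  R2 e u v i -> R2 e v w j -> R2 e u w (i + j).
Proof.
by move=> [m Hm W1] [n Hn W2]; exists (m + n); [apply: leq_add|apply: walk_cat W1 W2].
Qed.

Lemma R2_D2l (T : finType) (e : rel T) u v w k : D2 e u v -> R2 e v w k -> R2 e u w k.+1.
Proof. by move=> H1 H2; apply: (R2_cat (R2_1 H1) H2). Qed.

Lemma R2_sym (T : finType) (e : rel T) (esym : symmetric e) u v k : R2 e u v k -> R2 e v u k.
Proof. by case=> m Hm W; exists m => //; apply: walk_rev W; apply: D2_sym. Qed.

Lemma tri (T : finType) (e : rel T) u v :
  u = v \/ e u v \/ D2 e u v \/ ~ le2 e u v.
Proof.
case: (classic (le2 e u v)) => [[E|[E|[w [H1 H2]]]]|H]; [by left|by right; left| |by right; right; right].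
case: (classic (u = v)) => [E|Ne]; first by left.
case: (classic (e u v)) => [E|Ne2]; first by right; left.
by right; right; left; apply: mkD2 H1 H2.
Qed.

Definition geoP (T : finType) (e : rel T) : Prop :=
  forall u v, ~ le2 e u v -> exists p q, e u p /\ e p q /\ e q v.

Lemma Te (T : finType) (e : rel T) (esym : symmetric e) (Hgeo : geoP e) x y v :
  ~ le2 e x y -> ~ R2 e x y 4 -> e x v -> ~ le2 e v y -> R2 e x v 2.
Proof.
move=> Hxy N xv Hnv.
have [p [q [vp [pq qy]]]] := Hgeo _ _ Hnv.
have px : p <> x by move=> E; subst p; apply: Hxy; right; right; exists q.
have py : p <> y by move=> E; subst p; apply: Hnv; right; left.
have npy : ~ e p y by move=> E; apply: Hnv; right; right; exists p.
have Dpy : D2 e p y := mkD2 py npy pq qy.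
have epx : e p x.
  apply: NNPP => npx; apply: N.
  have Dxp : D2 e x p.
    apply: (@mkD2 _ _ _ _ v) => //; first by move=> E; apply: px.
    by rewrite esym.
  exact: R2_mono _ (R2_D2l Dxp (R2_1 Dpy)).
have qx : q <> x by move=> E; subst q; apply: Hxy; right; left.
have nqx : ~ e q x by move=> E; apply: Hxy; right; right; exists q; rewrite esym.
have Dqx : D2 e q x by apply: (@mkD2 _ _ _ _ p) => //; rewrite esym.
have vq : v <> q by move=> E; subst q; apply: Hnv; right; left.
have nvq : ~ e v q by move=> E; apply: Hnv; right; right; exists q.
have Dvq : D2 e v q := mkD2 vq nvq vp pq.
exact: R2_D2l (D2_sym esym Dqx) (R2_1 (D2_sym esym Dvq)).
Qed.

Lemma Tf (T : finType) (e : rel T) (esym : symmetric e) (Hgeo : geoP e) x y v :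
  ~ le2 e x y -> ~ R2 e x y 4 -> e v y -> ~ le2 e x v -> R2 e v y 2.
Proof.
move=> Hxy N vy Hnv; apply: R2_sym => //; apply: (Te esym Hgeo (x := y) (y := x)).
- by move=> H; apply: Hxy; apply: le2_sym.
- by move=> H; apply: N; apply: R2_sym.
- by rewrite esym.
- by move=> H; apply: Hnv; apply: le2_sym.
Qed.

Lemma Td (T : finType) (e : rel T) (esym : symmetric e) (Hgeo : geoP e) x y v :
  ~ le2 e x y -> ~ R2 e x y 4 -> ~ le2 e v x -> ~ le2 e v y -> False.
Proof.
move=> Hxy N Hvx Hvy.
have [p [q [vp [pq qx]]]] := Hgeo _ _ Hvx.
have [p' [q' [vp' [pq' qy']]]] := Hgeo _ _ Hvy.
have px : p <> x by move=> E; subst p; apply: Hvx; right; left.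
have npx : ~ e p x by move=> E; apply: Hvx; right; right; exists p.
have Dpx : D2 e p x := mkD2 px npx pq qx.
have vq : v <> q by move=> E; subst q; apply: Hvx; right; left.
have nvq : ~ e v q by move=> E; apply: Hvx; right; right; exists q.
have Dvq : D2 e v q := mkD2 vq nvq vp pq.
have py : p' <> y by move=> E; subst p'; apply: Hvy; right; left.
have npy : ~ e p' y by move=> E; apply: Hvy; right; right; exists p'.
have Dpy : D2 e p' y := mkD2 py npy pq' qy'.
have vq' : v <> q' by move=> E; subst q'; apply: Hvy; right; left.
have nvq' : ~ e v q' by move=> E; apply: Hvy; right; right; exists q'.
have Dvq' : D2 e v q' := mkD2 vq' nvq' vp' pq'.
have p_y : p <> y by move=> E; subst p; apply: Hvy; right; left.
have np_y : ~ e p y by move=> E; apply: Hvy; right; right; exists p.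
have nle_py : ~ le2 e p y.
  case=> [E|[E|[w [H1 H2]]]] //.
  have D : D2 e p y := mkD2 p_y np_y H1 H2.
  by apply: N; apply: R2_mono _ (R2_D2l (D2_sym esym Dpx) (R2_1 D)).
have p'_x : p' <> x by move=> E; subst p'; apply: Hvx; right; left.
have np'_x : ~ e p' x by move=> E; apply: Hvx; right; right; exists p'.
have nle_p'x : ~ le2 e p' x.
  case=> [E|[E|[w [H1 H2]]]] //.
  have D : D2 e p' x := mkD2 p'_x np'_x H1 H2.
  by apply: N; apply: R2_mono _ (R2_D2l (D2_sym esym D) (R2_1 Dpy)).
have epp : e p p'.
  apply: NNPP => npp; apply: N.
  have pp : p <> p' by move=> E; subst p'; apply: nle_p'x; apply: D2_le2.
  have D : D2 e p p' by apply: (@mkD2 _ _ _ _ v) => //; rewrite esym.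
  exact: R2_mono _ (R2_D2l (D2_sym esym Dpx) (R2_D2l D (R2_1 Dpy))).
have Dqp' : D2 e q p'.
  apply: (@mkD2 _ _ _ _ p) => //; last by rewrite esym.
  - by move=> E; subst q; apply: nle_p'x; right; left.
  - by move=> E; apply: nle_p'x; right; right; exists q; rewrite esym.
have Dpq' : D2 e p q'.
  apply: (@mkD2 _ _ _ _ p') => //.
  - by move=> E; subst q'; apply: nle_py; right; left.
  - by move=> E; apply: nle_py; right; right; exists q'.
have qy : q <> y by move=> E; subst q; apply: Hxy; right; left; rewrite esym.
have nqy : ~ e q y by move=> E; apply: Hxy; right; right; exists q; rewrite esym.
case: (classic (le2 e q y)) => [[E|[E|[w [H1 H2]]]] //|Hqy].
  have Dqy : D2 e q y := mkD2 qy nqy H1 H2.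
  have q'x : q' <> x by move=> E; subst q'; apply: Hxy; right; left.
  have nq'x : ~ e q' x by move=> E; apply: Hxy; right; right; exists q'; rewrite esym.
  case: (classic (le2 e q' x)) => [[E|[E|[w' [H1' H2']]]] //|Hq'x].
    have Dq'x : D2 e q' x := mkD2 q'x nq'x H1' H2'.
    apply: N; apply: (R2_D2l (D2_sym esym Dq'x)).
    apply: (R2_D2l (D2_sym esym Dvq')); apply: (R2_D2l Dvq); exact: R2_1.
  have B : R2 e q' y 2.
    apply: (Tf esym Hgeo Hxy N qy') => H; apply: Hq'x; exact: le2_sym.
  apply: N; apply: (R2_D2l (D2_sym esym Dpx)); exact: (R2_D2l Dpq' B).
have A : R2 e x q 2 by apply: (Te esym Hgeo Hxy N) => //; rewrite esym.
apply: N; apply: (R2_cat A); apply: (R2_D2l Dqp'); exact: R2_1.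
Qed.

Lemma H1 (T : finType) (e : rel T) (esym : symmetric e) (Hgeo : geoP e)
  (Hcon : connected_graph (D2 e)) x y : ~ le2 e x y -> R2 e x y 4.
Proof.
move=> Hxy; apply: NNPP => N.
have AB : forall z, R2 e x z 2 -> R2 e z y 2 -> False.
  by move=> z H1 H2; apply: N; apply: (R2_cat H1 H2).
have Te' := Te esym Hgeo Hxy N.
have Tf' := Tf esym Hgeo Hxy N.
have Td' := Td esym Hgeo Hxy N.
have cover : forall z, R2 e x z 2 \/ R2 e z y 2.
  move=> z; have [E|[E|[E|E]]] := tri e x z.
  - by left; subst; apply: R2_0.
  - have [E'|[E'|[E'|E']]] := tri e z y.
    + by right; subst; apply: R2_0.
    + by exfalso; apply: Hxy; right; right; exists z.
    + by right; apply: R2_mono _ (R2_1 E').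
    + by left; apply: Te'.
  - by left; apply: R2_mono _ (R2_1 E).
  - have [E'|[E'|[E'|E']]] := tri e z y.
    + by right; subst; apply: R2_0.
    + by right; apply: Tf'.
    + by right; apply: R2_mono _ (R2_1 E').
    + by exfalso; apply: (Td' z) => // H; apply: E; apply: le2_sym.
have [n W] := Hcon x y.
have [s [t [Ps [Pt Dst]]]] := cross (P := fun z => R2 e x z 2) W (R2_0 _ _ _)
  (fun H => N (R2_mono (isT : 2 <= 4) H)).
have Bt : R2 e t y 2 by case: (cover t).
have nA1s : ~ R2 e x s 1.
  by move=> H; apply: Pt; apply: (R2_cat H (R2_1 Dst)).
have nB1t : ~ R2 e t y 1.
  by move=> H; apply: N; apply: (R2_cat Ps (R2_D2l Dst H)).
have nBs : ~ R2 e s y 2 by move=> H; apply: (AB s).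
have exs : e x s.
  have [E|[E|[E|E]]] := tri e x s => //.
  - by subst; exfalso; apply: nA1s; apply: R2_0.
  - by exfalso; apply: nA1s; apply: R2_1.
  have [E'|[E'|[E'|E']]] := tri e s y.
  - by subst; exfalso; apply: nBs; apply: R2_0.
  - by exfalso; apply: nBs; apply: Tf'.
  - by exfalso; apply: nBs; apply: R2_mono _ (R2_1 E').
  - by exfalso; apply: (Td' s) => // H; apply: E; apply: le2_sym.
have nsy : ~ le2 e s y.
  have [E|[E|[E|E]]] := tri e s y => //.
  - by subst; exfalso; apply: nBs; apply: R2_0.
  - by exfalso; apply: Hxy; right; right; exists s.
  - by exfalso; apply: nBs; apply: R2_mono _ (R2_1 E).
have ety : e t y.
  have [E|[E|[E|E]]] := tri e t y => //.
  - by subst; exfalso; apply: nB1t; apply: R2_0.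
  - by exfalso; apply: nB1t; apply: R2_1.
  have [E'|[E'|[E'|E']]] := tri e x t.
  - by subst; exfalso; apply: Pt; apply: R2_0.
  - by exfalso; apply: Pt; apply: Te'.
  - by exfalso; apply: Pt; apply: R2_mono _ (R2_1 E').
  - by exfalso; apply: (Td' t) => // H; apply: E'; apply: le2_sym.
have nxt : ~ le2 e x t.
  have [E|[E|[E|E]]] := tri e x t => //.
  - by subst; exfalso; apply: Pt; apply: R2_0.
  - by exfalso; apply: Hxy; right; right; exists t.
  - by exfalso; apply: Pt; apply: R2_mono _ (R2_1 E).
case/D2P: Dst => _ [_ [m [sm mt]]].
have my : m <> y by move=> E; subst m; apply: nsy; right; left.
have nmy : ~ e m y by move=> E; apply: nsy; right; right; exists m.
have Dmy : D2 e m y := mkD2 my nmy mt ety.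
have xm : x <> m by move=> E; subst m; apply: nxt; right; left.
have nxm : ~ e x m by move=> E; apply: nxt; right; right; exists m.
have Dxm : D2 e x m := mkD2 xm nxm exs sm.
by apply: N; apply: R2_mono _ (R2_D2l Dxm (R2_1 Dmy)).
Qed.

Theorem theorem2p8 (T : finType) (e : rel T) :
  simple_graph e ->
  diam_eq (fun a b => e a b) 3 ->
  connected_graph (D2 e) ->
  diam_le (D2 e) 5.
Proof.
move=> [esym eirr] [Hdiam [a [b Dab]]] Hcon.
have Hgeo : geoP e.
  move=> u v Nuv; have [n [W _] Hn] := Hdiam u v.
  case: n W Hn => [|[|[|[|n]]]] //= W _.
  - by exfalso; apply: Nuv; left.
  - by case: W => z [H Ez]; subst z; exfalso; apply: Nuv; right; left.
  - by case: W => z [H1 [z' [H2 Ez]]]; subst z'; exfalso; apply: Nuv; right; right; exists z.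
  - by case: W => p [H1 [q [H2 [z [H3 Ez]]]]]; subst z; exists p, q.
have nab : ~ le2 e a b.
  case: Dab => _ Hmin; case=> [E|[E|[w [H1 H2]]]].
  - by apply: (Hmin 0).
  - by apply: (Hmin 1) => //=; exists b.
  - by apply: (Hmin 2) => //=; exists w; split => //; exists b.
suff R5 : forall u v, R2 e u v 5.
  move=> u v; have [m Hm W] := R5 u v; have [n Dn Hn] := walk_dist W.
  by exists n => //; apply: leq_trans Hn Hm.
have H1' := H1 esym Hgeo Hcon.
move=> u v; have [E|[E|[E|E]]] := tri e u v.
- by subst; apply: R2_0.
-
  case: (classic (exists z, D2 e u z /\ D2 e v z)) => [[z [Hz1 Hz2]]|nA].
    by apply: R2_mono _ (R2_D2l Hz1 (R2_1 (D2_sym esym Hz2))).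
  case: (classic (exists z, ~ le2 e u z /\ D2 e z v)) => [[z [Hz1 Hz2]]|nB1].
    by apply: (R2_cat (H1' _ _ Hz1) (R2_1 Hz2)).
  case: (classic (exists z, D2 e u z /\ ~ le2 e z v)) => [[z [Hz1 Hz2]]|nB2].
    by apply: (R2_D2l Hz1 (H1' _ _ Hz2)).
  have dom : forall z, z = u \/ z = v \/ e u z \/ e v z.
    move=> z; apply: NNPP => Hz.
    have zu : z <> u by move=> H; apply: Hz; left.
    have zv : z <> v by move=> H; apply: Hz; right; left.
    have nuz : ~ e u z by move=> H; apply: Hz; right; right; left.
    have nvz : ~ e v z by move=> H; apply: Hz; right; right; right.
    have [F|[F|[F|F]]] := tri e u z; first by apply: zu.
    + by apply: nuz.
    + have [G|[G|[G|G]]] := tri e v z.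
      * by apply: zv.
      * by apply: nvz.
      * by apply: nA; exists z.
      * by apply: nB2; exists z; split => // H; apply: G; apply: le2_sym.
    + have [G|[G|[G|G]]] := tri e v z.
      * by apply: zv.
      * by apply: nvz.
      * by apply: nB1; exists z; split => //; apply: D2_sym.
      * have Fz : ~ le2 e z u by move=> H; apply: F; apply: le2_sym.
        have [r [s [zr [rs su]]]] := Hgeo _ _ Fz.
        have ru : r <> u by move=> H; subst r; apply: Fz; right; left.
        have nru : ~ e r u by move=> H; apply: Fz; right; right; exists r.
        have Dur : D2 e u r := D2_sym esym (mkD2 ru nru rs su).
        have [K|[K|[K|K]]] := tri e v r.
        -- by subst r; apply: G; right; left; rewrite esym.
        -- by apply: G; right; right; exists r; split => //; rewrite esym.
        -- by apply: nA; exists r.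
        -- by apply: nB2; exists r; split => // H; apply: K; apply: le2_sym.
  apply: NNPP => N.
  have [n W] := Hcon u v.
  have [s [t [Ps [Pt Dst]]]] := cross (P := fun z => R2 e u z 2) W (R2_0 _ _ _)
    (fun H => N (R2_mono (isT : 2 <= 5) H)).
  simpl in Ps, Pt.
  have ntv : ~ R2 e t v 2.
    by move=> H; apply: N; apply: (R2_cat Ps (R2_D2l Dst H)).
  have tu : t <> u by move=> H; subst t; apply: Pt; apply: R2_0.
  have tv : t <> v by move=> H; subst t; apply: ntv; apply: R2_0.
  have eut : e u t.
    apply: NNPP => nut; have [K|[K|[K|K]]] := dom t.
    - by exfalso; apply: tu.
    - by exfalso; apply: tv.
    - by apply: nut.
    by apply: Pt; apply: R2_mono _ (R2_1 (mkD2 (fun H : u = t => tu (Logic.eq_sym H)) nut E K)).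
  have evt : e v t.
    apply: NNPP => nvt.
    have tv' : t <> v := tv.
    have ntv' : ~ e t v by move=> H; apply: nvt; rewrite esym.
    have etu : e t u by rewrite esym.
    by apply: ntv; apply: R2_mono _ (R2_1 (mkD2 tv' ntv' etu E)).
  have key : forall c d, ~ le2 e c d -> e t c.
    move=> c d ncd; apply: NNPP => ntc.
    have ecc : forall c', e u c' -> e v c' -> le2 e c' d.
      move=> c' uc vc; have [K|[K|[K|K]]] := dom d.
      - by subst d; right; left; rewrite esym.
      - by subst d; right; left; rewrite esym.
      - by right; right; exists u; rewrite esym.
      - by right; right; exists v; rewrite esym.
    have tc : t <> c by move=> H; subst c; apply: ncd; apply: ecc.
    have [K|[K|[K|K]]] := dom c.
    - by subst c; apply: ntc; rewrite esym.
    - by subst c; apply: ntc; rewrite esym.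
    - case: (classic (e v c)) => vc; first by apply: ncd; apply: ecc.
      have cv : c <> v by move=> H; subst c; apply: ntc; rewrite esym.
      have ncv : ~ e c v by move=> H; apply: vc; rewrite esym.
      have Dcv : D2 e c v by apply: (@mkD2 _ _ _ _ u) => //; rewrite esym.
      have Dtc : D2 e t c by apply: (@mkD2 _ _ _ _ u) => //; rewrite esym.
      by apply: ntv; apply: R2_D2l Dtc (R2_1 Dcv).
    - case: (classic (e u c)) => uc; first by apply: ncd; apply: ecc.
      have cu : c <> u by move=> H; subst c; apply: ntc; rewrite esym.
      have ncu : ~ e c u by move=> H; apply: uc; rewrite esym.
      have Dcu : D2 e c u by apply: (@mkD2 _ _ _ _ v) => //; rewrite esym.
      have Dtc : D2 e t c by apply: (@mkD2 _ _ _ _ v) => //; rewrite esym.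
      by apply: Pt; apply: R2_D2l (D2_sym esym Dcu) (R2_1 (D2_sym esym Dtc)).
  have ta := key _ _ nab.
  have tb := key b a (fun H => nab (le2_sym esym H)).
  by apply: nab; right; right; exists t; rewrite esym.
- by apply: R2_mono _ (R2_1 E).
- by apply: R2_mono _ (H1' _ _ E).
Qed.
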